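(* Let $G$ be a 4-dimensional connected Lie group with a global basis $\{X_1,\dots,X_4\}$ of left invariant vector fields satisfying, for real constants $\lambda_1,\dots,\lambda_4$, $[X_1,X_2]=\lambda_1X_1+\lambda_2X_2$, $[X_1,X_3]=\lambda_3X_2-\lambda_1X_4$, $[X_1,X_4]=-\lambda_3X_1-\lambda_2X_4$, $[X_2,X_3]=\lambda_4X_2+\lambda_1X_3$, $[X_2,X_4]=-\lambda_4X_1+\lambda_2X_3$, $[X_3,X_4]=\lambda_3X_3+\lambda_4X_4$, and let $JX_1=X_3$, $JX_2=X_4$, $JX_3=-X_1$, $JX_4=-X_2$, $g(X_1,X_1)=g(X_2,X_2)=-g(X_3,X_3)=-g(X_4,X_4)=1$, $g(X_i,X_j)=0$ for $i\ne j$. Let $\nabla'$ be a natural connection on $(G,J,g)$ with totally skew-symmetric torsion tensor $T$. Then $\nabla'_{X_1}X_1=\nabla'_{X_3}X_3=-\lambda_1X_2-\lambda_3X_4$, $\nabla'_{X_2}X_2=\nabla'_{X_4}X_4=\lambda_2X_1+\lambda_4X_3$, $\nabla'_{X_1}X_2=\nabla'_{X_3}X_4=\lambda_1X_1+\lambda_3X_3$, $\nabla'_{X_1}X_3=-\nabla'_{X_3}X_1=\lambda_3X_2-\lambda_1X_4$, $\nabla'_{X_1}X_4=-\nabla'_{X_3}X_2=-\lambda_3X_1+\lambda_1X_3$, $\nabla'_{X_2}X_1=\nabla'_{X_4}X_3=-\lambda_2X_2-\lambda_4X_4$, $\nabla'_{X_2}X_3=-\nabla'_{X_4}X_1=\lambda_4X_2-\lambda_2X_4$,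 $\nabla'_{X_2}X_4=-\nabla'_{X_4}X_2=-\lambda_4X_1+\lambda_2X_3$, and the components $T_{ijk}=g(T(X_i,X_j),X_k)$ are all zero except those determined by total skew-symmetry from $T_{134}=\lambda_1$, $T_{234}=\lambda_2$, $T_{123}=-\lambda_3$, $T_{124}=-\lambda_4$.
   Context: A linear connection $\nabla'$ on an almost complex manifold with Norden metric $(M,J,g)$ ($J^2=-\mathrm{Id}$, $g(Jx,Jy)=-g(x,y)$) is natural if $\nabla'J=0$ and $\nabla'g=0$. Its torsion is $T(x,y)=\nabla'_xy-\nabla'_yx-[x,y]$, and $T(x,y,z)=g(T(x,y),z)$; the torsion is totally skew-symmetric if $T(x,y,z)$ is a 3-form, i.e. skew-symmetric in every pair of arguments. *)

(* Defs.v *)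
(* Algebraic model of the smooth setting:
   F  = ring of smooth real functions on G (a commutative R-algebra),
   V  = module of vector fields; since X_1..X_4 is a global frame, every
        vector field is uniquely  sum_i x_i X_i  with x_i in F, so V = F^4
        (row vectors), and X_i is the i-th standard basis vector.
   D i : F -> F  is the action of X_i on functions (an R-linear derivation),
   and the action of a general vector field x on f is  sum_i x_i D_i f.  *)
From HB Require Import structures.
From mathcomp Require Import all_boot all_order all_algebra.
From mathcomp Require Import reals.
Set Implicit Arguments. Unset Strict Implicit. Unset Printing Implicit Defensive.
Import Order.TTheory GRing.Theory Num.Theory.
Local Open Scope ring_scope.

Section Model.
Variables (R : realType) (F : comAlgType R).

Definition vf := 'rV[F]_4.

Definition i1 : 'I_4 := @Ordinal 4 0 erefl.
Definition i2 : 'I_4 := @Ordinal 4 1 erefl.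
Definition i3 : 'I_4 := @Ordinal 4 2 erefl.
Definition i4 : 'I_4 := @Ordinal 4 3 erefl.

Definition X (i : 'I_4) : vf := delta_mx 0 i.

Definition comb (a1 a2 a3 a4 : R) : vf :=
  (a1%:A : F) *: X i1 + (a2%:A : F) *: X i2 + (a3%:A : F) *: X i3 + (a4%:A : F) *: X i4.

Definition brX (l1 l2 l3 l4 : R) (i j : 'I_4) : vf :=
  match nat_of_ord i, nat_of_ord j with
  | 0, 1 => comb l1 l2 0 0
  | 1, 0 => - comb l1 l2 0 0
  | 0, 2 => comb 0 l3 0 (- l1)
  | 2, 0 => - comb 0 l3 0 (- l1)
  | 0, 3 => comb (- l3) 0 0 (- l2)
  | 3, 0 => - comb (- l3) 0 0 (- l2)
  | 1, 2 => comb 0 l4 l1 0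
  | 2, 1 => - comb 0 l4 l1 0
  | 1, 3 => comb (- l4) 0 l2 0
  | 3, 1 => - comb (- l4) 0 l2 0
  | 2, 3 => comb 0 0 l3 l4
  | 3, 2 => - comb 0 0 l3 l4
  | _, _ => 0
  end.

Definition act (D : 'I_4 -> F -> F) (x : vf) (f : F) : F :=
  \sum_i x 0 i * D i f.

Definition bracket (D : 'I_4 -> F -> F) (c : 'I_4 -> 'I_4 -> vf) (x y : vf) : vf :=
  \row_k (act D x (y 0 k) - act D y (x 0 k))
  + \sum_i \sum_j (x 0 i * y 0 j) *: c i j.

Definition eps (i : 'I_4) : R := if (nat_of_ord i < 2)%N then 1 else -1.
Definition gmet (x y : vf) : F := \sum_i ((eps i)%:A : F) * x 0 i * y 0 i.

Definition Jop (x : vf) : vf :=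
  \row_k (match nat_of_ord k with
          | 0 => - x 0 i3
          | 1 => - x 0 i4
          | 2 => x 0 i1
          | _ => x 0 i2
          end).

Definition is_frame_action (D : 'I_4 -> F -> F) (c : 'I_4 -> 'I_4 -> vf) : Prop :=
  [/\ forall i f h, D i (f + h) = D i f + D i h,
      forall i (a : R) f, D i (a *: f) = a *: D i f,
      forall i f h, D i (f * h) = D i f * h + f * D i h &
      forall i j f, D i (D j f) - D j (D i f) = act D (c i j) f].

Definition is_connection (D : 'I_4 -> F -> F) (nab : vf -> vf -> vf) : Prop :=
  [/\ forall (f : F) x y z, nab (f *: x + y) z = f *: nab x z + nab y z,
      forall x y z, nab x (y + z) = nab x y + nab x z &
      forall (f : F) x y, nab x (f *: y) = act D x f *: y + f *: nab x y].

Definition is_natural (D : 'I_4 -> F -> F) (nab : vf -> vf -> vf) : Prop :=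
  (forall x y, nab x (Jop y) = Jop (nab x y)) /\
  (forall x y z, act D x (gmet y z) = gmet (nab x y) z + gmet y (nab x z)).

Definition torsion D c (nab : vf -> vf -> vf) (x y : vf) : vf :=
  nab x y - nab y x - bracket D c x y.

Definition torsion3 D c nab (x y z : vf) : F := gmet (torsion D c nab x y) z.

Definition totally_skew D c nab : Prop :=
  forall x y z, torsion3 D c nab x y z = - torsion3 D c nab y x z /\
                torsion3 D c nab x y z = - torsion3 D c nab x z y.

End Model.

(* Main.v *)
Require Import Defs.
From HB Require Import structures.
From mathcomp Require Import all_boot all_order all_algebra.
From mathcomp Require Import reals ring.
Import Order.TTheory GRing.Theory Num.Theory.
Local Open Scope ring_scope.
Section S.
Variables (R : realType) (F : comAlgType R).
Lemma XE i k : X F i 0 k = (i == k)%:R.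
Proof. by rewrite /X mxE eq_sym. Qed.
Lemma sum4 (f : 'I_4 -> F) : \sum_i f i = f i1 + f i2 + f i3 + f i4.
Proof.
rewrite !big_ord_recr big_ord0 /= add0r.
congr (_ + _ + _ + _); congr f; exact: val_inj.
Qed.
Lemma ord4P (P : 'I_4 -> Prop) : P i1 -> P i2 -> P i3 -> P i4 -> forall i, P i.
Proof.
move=> h1 h2 h3 h4 [[|[|[|[|n]]]] Hn] //.
- by have -> : Ordinal Hn = i1 by apply: val_inj.
- by have -> : Ordinal Hn = i2 by apply: val_inj.
- by have -> : Ordinal Hn = i3 by apply: val_inj.
- by have -> : Ordinal Hn = i4 by apply: val_inj.
Qed.
Lemma rowE4 (u v : vf F) : u 0 i1 = v 0 i1 -> u 0 i2 = v 0 i2 -> u 0 i3 = v 0 i3 ->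
  u 0 i4 = v 0 i4 -> u = v.
Proof. move=> *; apply/rowP; apply: ord4P => //. Qed.
Lemma gmetXr v k : gmet v (X F k) = (eps R k)%:A * v 0 k.
Proof.
rewrite /gmet (bigD1 k) //= big1 ?addr0; first by rewrite XE eqxx mulr1.
by move=> i ik; rewrite XE eq_sym (negbTE ik) mulr0.
Qed.
Lemma gmetXl v k : gmet (X F k) v = (eps R k)%:A * v 0 k.
Proof.
rewrite /gmet (bigD1 k) //= big1 ?addr0; first by rewrite XE eqxx mulr1 mulrC.
by move=> i ik; rewrite XE eq_sym (negbTE ik) mulr0 mul0r.
Qed.
Lemma half (x : F) : x + x = 0 -> x = 0.
Proof.
move=> h; have : (2^-1 : R) *: (x + x) = 0 by rewrite h scaler0.
rewrite -mulr2n -scaler_nat scalerA mulVf ?scale1r //.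
by rewrite pnatr_eq0.
Qed.
Lemma comb1 a b c d : comb F a b c d 0 i1 = a%:A.
Proof. rewrite /comb !mxE /= !mulr1 !mulr0 !addr0. done. Qed.
Lemma comb2 a b c d : comb F a b c d 0 i2 = b%:A.
Proof. rewrite /comb !mxE /= !mulr1 !mulr0 !addr0 add0r. done. Qed.
Lemma comb3 a b c d : comb F a b c d 0 i3 = c%:A.
Proof. rewrite /comb !mxE /= !mulr1 !mulr0 !addr0 !add0r. done. Qed.
Lemma comb4 a b c d : comb F a b c d 0 i4 = d%:A.
Proof. rewrite /comb !mxE /= !mulr1 !mulr0 !addr0 !add0r. done. Qed.
Lemma epsA1 : (eps R i1)%:A = 1 :> F. Proof. by rewrite /eps /= scale1r. Qed.
Lemma epsA2 : (eps R i2)%:A = 1 :> F. Proof. by rewrite /eps /= scale1r. Qed.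
Lemma epsA3 : (eps R i3)%:A = -1 :> F. Proof. by rewrite /eps /= scaleN1r. Qed.
Lemma epsA4 : (eps R i4)%:A = -1 :> F. Proof. by rewrite /eps /= scaleN1r. Qed.
Lemma JX1 : Jop (X F i1) = X F i3. Proof. by apply: rowE4; rewrite !mxE /= ?oppr0. Qed.
Lemma JX2 : Jop (X F i2) = X F i4. Proof. by apply: rowE4; rewrite !mxE /= ?oppr0. Qed.

Variables (l1 l2 l3 l4 : R) (D : 'I_4 -> F -> F) (nab : vf F -> vf F -> vf F).
Hypothesis Hf : is_frame_action D (brX F l1 l2 l3 l4).
Hypothesis Hc : is_connection D nab.
Hypothesis Hn : is_natural D nab.
Hypothesis Hs : totally_skew D (brX F l1 l2 l3 l4) nab.

Lemma D1 i : D i 1 = 0.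
Proof.
case: Hf => _ _ HL _; have := HL i 1 1; rewrite !mul1r !mulr1 => e.
by apply: (addrI (D i 1)); rewrite addr0 -e.
Qed.
Lemma Dcst i (a : R) : D i (a%:A) = 0.
Proof. case: Hf => _ HZ _ _. by rewrite HZ D1 scaler0. Qed.
Lemma Dnat i (b : bool) : D i (b%:R) = 0.
Proof. case: b; first exact: D1. have -> : (false%:R : F) = (0:R)%:A by rewrite scale0r. exact: Dcst. Qed.
Lemma D0 i : D i 0 = 0.
Proof. by have := Dcst i 0; rewrite scale0r. Qed.
Lemma actX i f : act D (X F i) f = D i f.
Proof.
rewrite /act (bigD1 i) //= big1 ?addr0; first by rewrite XE eqxx mul1r.
by move=> k ki; rewrite XE eq_sym (negbTE ki) mul0r.
Qed.
Lemma bracketX i j : bracket D (brX F l1 l2 l3 l4) (X F i) (X F j) = brX F l1 l2 l3 l4 i j.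
Proof.
rewrite /bracket.
have -> : (\row_k (act D (X F i) (X F j 0 k) - act D (X F j) (X F i 0 k))) = 0 :> vf F.
  by apply/rowP => k; rewrite mxE !actX !XE !Dnat subrr mxE.
rewrite add0r (bigD1 i) //= [X in _ + X = _]big1 ?addr0.
  rewrite (bigD1 j) //= [X in _ + X = _]big1 ?addr0; first by rewrite !XE !eqxx mul1r scale1r.
  by move=> k kj; rewrite !XE eq_sym (negbTE kj) mulr0 scale0r.
by move=> k ki; rewrite big1 // => m _; rewrite !XE eq_sym (negbTE ki) mul0r scale0r.
Qed.
Lemma T3 i j k : torsion3 D (brX F l1 l2 l3 l4) nab (X F i) (X F j) (X F k) =
  (eps R k)%:A * (nab (X F i) (X F j) 0 k - nab (X F j) (X F i) 0 k - brX F l1 l2 l3 l4 i j 0 k).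
Proof. by rewrite /torsion3 /torsion bracketX gmetXr !mxE. Qed.
Lemma met i j k : (eps R k)%:A * nab (X F i) (X F j) 0 k + (eps R j)%:A * nab (X F i) (X F k) 0 j = 0.
Proof.
case: Hn => _ H; have := H (X F i) (X F j) (X F k).
rewrite actX gmetXr gmetXl gmetXr XE.
case: (j == k); first by rewrite mulr1 Dcst => <-.
by rewrite mulr0n mulr0 D0 => <-.
Qed.
Lemma J13 i : nab (X F i) (X F i3) = Jop (nab (X F i) (X F i1)).
Proof. by case: Hn => H _; rewrite -JX1 H. Qed.
Lemma J24 i : nab (X F i) (X F i4) = Jop (nab (X F i) (X F i2)).
Proof. by case: Hn => H _; rewrite -JX2 H. Qed.
Lemma Tz a b : torsion3 D (brX F l1 l2 l3 l4) nab (X F a) (X F b) (X F b) = 0.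
Proof. apply: half; case: (Hs (X F a) (X F b) (X F b)) => _ {1}->; exact: addNr. Qed.
Lemma Tz' a b : torsion3 D (brX F l1 l2 l3 l4) nab (X F b) (X F a) (X F b) = 0.
Proof. by case: (Hs (X F b) (X F a) (X F b)) => -> _; rewrite Tz oppr0. Qed.
Lemma JE1 (v : vf F) : Jop v 0 i1 = - v 0 i3. Proof. by rewrite mxE. Qed.
Lemma JE2 (v : vf F) : Jop v 0 i2 = - v 0 i4. Proof. by rewrite mxE. Qed.
Lemma JE3 (v : vf F) : Jop v 0 i3 = v 0 i1. Proof. by rewrite mxE. Qed.
Lemma JE4 (v : vf F) : Jop v 0 i4 = v 0 i2. Proof. by rewrite mxE. Qed.
Lemma sol1 (a b : F) : a + b = 0 -> a = - b.
Proof. by move/eqP; rewrite addr_eq0 => /eqP. Qed.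
Lemma sol2 (a b : F) : - a + - b = 0 -> a = - b.
Proof. by rewrite -opprD => /eqP; rewrite oppr_eq0 => /eqP /sol1. Qed.

Notation N i j := (nab (X F i) (X F j)).
Lemma s11 i : N i i1 0 i1 = 0.
Proof. by have := met i i1 i1; rewrite ?epsA1 ?epsA2 ?epsA3 ?epsA4 mul1r => /half. Qed.
Lemma s13 i : N i i1 0 i3 = 0.
Proof. have := met i i1 i3; rewrite ?epsA1 ?epsA2 ?epsA3 ?epsA4 J13 JE1 mulN1r mul1r => /half /eqP.
  by rewrite oppr_eq0 => /eqP. Qed.
Lemma s22 i : N i i2 0 i2 = 0.
Proof. by have := met i i2 i2; rewrite ?epsA1 ?epsA2 ?epsA3 ?epsA4 mul1r => /half. Qed.
Lemma s24 i : N i i2 0 i4 = 0.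
Proof. have := met i i2 i4; rewrite ?epsA1 ?epsA2 ?epsA3 ?epsA4 J24 JE2 mulN1r mul1r => /half /eqP.
  by rewrite oppr_eq0 => /eqP. Qed.
Lemma s21 i : N i i2 0 i1 = - N i i1 0 i2.
Proof. by have := met i i1 i2; rewrite ?epsA1 ?epsA2 ?epsA3 ?epsA4 !mul1r addrC => /sol1. Qed.
Lemma s23 i : N i i2 0 i3 = - N i i1 0 i4.
Proof. by have := met i i2 i3; rewrite ?epsA1 ?epsA2 ?epsA3 ?epsA4 J13 JE2 mulN1r mul1r => /sol2. Qed.
Lemma oppE (v : vf F) k : (- v) 0 k = - v 0 k.
Proof. by rewrite mxE. Qed.
Lemma fin (k E x v : F) : E = 0 -> x - v = k * E -> x = v.
Proof. by move=> -> ; rewrite mulr0 => /eqP; rewrite subr_eq0 => /eqP. Qed.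
Ltac tz a b k := have := Tz' a b; rewrite T3 ?epsA1 ?epsA2 ?epsA3 ?epsA4 /= ?comb1 ?comb2 ?comb3 ?comb4 ?oppE ?comb1 ?comb2 ?comb3 ?comb4 ?scaleNr ?J13 ?J24 ?JE1 ?JE2 ?JE3 ?JE4 ?s11 ?s13 ?s22 ?s24 ?s21 ?s23 ?s11 ?s13 ?s22 ?s24;
  first [move/(fin k); apply; ring | move/(fin (-k)); apply; ring].
Lemma P1 : N i1 i1 0 i2 = - l1%:A.
Proof. tz i2 i1 (1 : F). Qed.
Ltac tzs a b := have := Tz' a b; rewrite T3 ?epsA1 ?epsA2 ?epsA3 ?epsA4 /= ?comb1 ?comb2 ?comb3 ?comb4 ?oppE ?comb1 ?comb2 ?comb3 ?comb4 ?scaleNr ?J13 ?J24 ?JE1 ?JE2 ?JE3 ?JE4 ?s11 ?s13 ?s22 ?s24 ?s21 ?s23 ?s11 ?s13 ?s22 ?s24.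
Lemma Q1 : N i1 i1 0 i4 = - l3%:A.
Proof. tz i4 i1 (1 : F). Qed.
Lemma P2 : N i2 i1 0 i2 = - l2%:A.
Proof. tz i1 i2 (1 : F). Qed.
Lemma Q2 : N i2 i1 0 i4 = - l4%:A.
Proof. tz i3 i2 (1 : F). Qed.
Lemma P3 : N i3 i1 0 i2 = - l3%:A.
Proof. tz i4 i3 (1 : F). Qed.
Lemma Q3 : N i3 i1 0 i4 = l1%:A.
Proof. tz i2 i3 (1 : F). Qed.
Lemma P4 : N i4 i1 0 i2 = - l4%:A.
Proof. tz i3 i4 (1 : F). Qed.
Lemma Q4 : N i4 i1 0 i4 = l2%:A.
Proof. tz i1 i4 (1 : F). Qed.
Lemma brXdiag j : brX F l1 l2 l3 l4 j j = 0.
Proof. by move: j; apply: ord4P. Qed.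
Ltac ent := rewrite ?oppE /= ?comb1 ?comb2 ?comb3 ?comb4 ?oppE ?comb1 ?comb2 ?comb3 ?comb4 ?J13 ?J24 ?JE1 ?JE2 ?JE3 ?JE4 ?s11 ?s13 ?s22 ?s24 ?s21 ?s23 ?s11 ?s13 ?s22 ?s24 ?P1 ?Q1 ?P2 ?Q2 ?P3 ?Q3 ?P4 ?Q4 ?scaleNr ?scale0r ?epsA1 ?epsA2 ?epsA3 ?epsA4; ring.
Lemma main_in :
  let nb := fun i j => nab (X F i) (X F j) in
  let T := fun i j k => torsion3 D (brX F l1 l2 l3 l4) nab (X F i) (X F j) (X F k) in
  (nb i1 i1 = comb F 0 (- l1) 0 (- l3) /\ nb i3 i3 = comb F 0 (- l1) 0 (- l3) /\
      nb i2 i2 = comb F l2 0 l4 0 /\ nb i4 i4 = comb F l2 0 l4 0 /\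
      nb i1 i2 = comb F l1 0 l3 0 /\ nb i3 i4 = comb F l1 0 l3 0 /\
      nb i1 i3 = comb F 0 l3 0 (- l1) /\ - nb i3 i1 = comb F 0 l3 0 (- l1) /\
      nb i1 i4 = comb F (- l3) 0 l1 0 /\ - nb i3 i2 = comb F (- l3) 0 l1 0 /\
      nb i2 i1 = comb F 0 (- l2) 0 (- l4) /\ nb i4 i3 = comb F 0 (- l2) 0 (- l4) /\
      nb i2 i3 = comb F 0 l4 0 (- l2) /\ - nb i4 i1 = comb F 0 l4 0 (- l2) /\
      nb i2 i4 = comb F (- l4) 0 l2 0 /\ - nb i4 i2 = comb F (- l4) 0 l2 0 /\
      [/\ T i1 i3 i4 = l1%:A, T i2 i3 i4 = l2%:A, T i1 i2 i3 = (- l3)%:A,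
          T i1 i2 i4 = (- l4)%:A &
          forall i j k : 'I_4, (i == j) || (j == k) || (i == k) -> T i j k = 0]).

Proof.
move=> nb T; rewrite {}/nb {}/T.
do 16 (split; first by apply: rowE4; ent).
split; try by rewrite T3; ent.
move=> i j k /orP [/orP [/eqP-> | /eqP->] | /eqP->].
- by rewrite T3 brXdiag subrr sub0r mxE oppr0 mulr0.
- exact: Tz.
- exact: Tz'.
Qed.
End S.

Theorem proposition3p5 (R : realType) (F : comAlgType R)
  (l1 l2 l3 l4 : R) (D : 'I_4 -> F -> F) (nab : vf F -> vf F -> vf F) :
  is_frame_action D (brX F l1 l2 l3 l4) ->
  is_connection D nab ->
  is_natural D nab ->
  totally_skew D (brX F l1 l2 l3 l4) nab ->
  let nb := fun i j => nab (X F i) (X F j) in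
  let T := fun i j k => torsion3 D (brX F l1 l2 l3 l4) nab (X F i) (X F j) (X F k) in
  (nb i1 i1 = comb F 0 (- l1) 0 (- l3) /\ nb i3 i3 = comb F 0 (- l1) 0 (- l3) /\
      nb i2 i2 = comb F l2 0 l4 0 /\ nb i4 i4 = comb F l2 0 l4 0 /\
      nb i1 i2 = comb F l1 0 l3 0 /\ nb i3 i4 = comb F l1 0 l3 0 /\
      nb i1 i3 = comb F 0 l3 0 (- l1) /\ - nb i3 i1 = comb F 0 l3 0 (- l1) /\
      nb i1 i4 = comb F (- l3) 0 l1 0 /\ - nb i3 i2 = comb F (- l3) 0 l1 0 /\
      nb i2 i1 = comb F 0 (- l2) 0 (- l4) /\ nb i4 i3 = comb F 0 (- l2) 0 (- l4) /\
      nb i2 i3 = comb F 0 l4 0 (- l2) /\ - nb i4 i1 = comb F 0 l4 0 (- l2) /\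
      nb i2 i4 = comb F (- l4) 0 l2 0 /\ - nb i4 i2 = comb F (- l4) 0 l2 0 /\
      [/\ T i1 i3 i4 = l1%:A, T i2 i3 i4 = l2%:A, T i1 i2 i3 = (- l3)%:A,
          T i1 i2 i4 = (- l4)%:A &
          forall i j k : 'I_4, (i == j) || (j == k) || (i == k) -> T i j k = 0]).

Proof. move=> Hf Hc Hn Hs; exact: main_in. Qed.
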